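(* Let $k\in[n-1]$, $w\in S_n^{k\searrow}$, and suppose there is an increasing $k$-chain from some $u$ to $w$. Suppose some step $u'\lessdot_k w'$ of this chain exchanges the values $a<b$, and that $b$ is at position $i$ in $w'$. Then: (1) $b$ is not among $u(1),\dots,u(k)$; (2) for every $c$ with $a<c<b$, $u^{-1}(c)<i$; (3) for every $c$ with $a<c<b$, the value $c$ is not exchanged by any step of the chain.
   Context: Permutations in one-line notation; $wt_{i,j}$ is $w$ with positions $i<j$ swapped; $\ell$ the number of inversions. $u\lessdot w$ iff $w=ut_{i,j}$, $i<j$, $\ell(w)=\ell(u)+1$; $u\lessdot_k w$ iff moreover $i\le k<j$. A $k$-chain $v_1\lessdot_k\cdots\lessdot_k v_d$ is increasing if the smaller of the two values exchanged at each step strictly increases along the chain. $S_n^{k\searrow}=\{v\in S_n: v(k+1)>\dots>v(n)\}$. *)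

(* Defs.v *)
(* Permutations of 'I_n = {0,...,n-1}; positions and values
   are 0-based (shifted down by one from the paper's 1-based convention). *)
From mathcomp Require Import all_boot all_fingroup.
Set Implicit Arguments. Unset Strict Implicit. Unset Printing Implicit Defensive.

Definition ell n (w : 'S_n) : nat :=
  #|[set p : 'I_n * 'I_n | (p.1 < p.2)%N && (w p.2 < w p.1)%N]|.

(* w t_{i,j} : w with positions i and j swapped, i.e. the function
   p |-> w (t_{i,j} p).  In mathcomp, (s * t) x = t (s x). *)
Definition swap_pos n (w : 'S_n) (i j : 'I_n) : 'S_n := (tperm i j * w)%g.

(* kstep k u w a b : u <._k w via w = u t_{i,j} with i < j,
   i <= k < j (1-based), i.e. i < k <= j (0-based), ell w = ell u + 1,
   and the values exchanged are a = u(i) and b = u(j). *)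
Definition kstep n (k : nat) (u w : 'S_n) (a b : 'I_n) : Prop :=
  exists i j : 'I_n,
    [/\ (i < j)%N, (i < k)%N & (k <= j)%N] /\
    [/\ w = swap_pos u i j, ell w = (ell u).+1, a = u i & b = u j].

Definition kcover n (k : nat) (u w : 'S_n) : Prop :=
  exists a b : 'I_n, kstep k u w a b.

(* The chain v_1 <._k v_2 <._k ... <._k v_d is the sequence s = [v_1; ...; v_d]
   (d >= 1).  It is increasing if the smaller exchanged value strictly
   increases from each step to the next. *)
Definition inc_kchain n (k : nat) (s : seq 'S_n) : Prop :=
  (forall m, (m.+1 < size s)%N -> kcover k (nth 1%g s m) (nth 1%g s m.+1)) /\
  (forall m, (m.+2 < size s)%N ->
     forall a b a' b' : 'I_n,
       kstep k (nth 1%g s m) (nth 1%g s m.+1) a b ->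
       kstep k (nth 1%g s m.+1) (nth 1%g s m.+2) a' b' ->
       (minn a b < minn a' b')%N).

(* S_n^{k \searrow}: v(k+1) > ... > v(n) (1-based), i.e. v is strictly
   decreasing on the 0-based positions k, ..., n-1. *)
Definition dec_after n (k : nat) (v : 'S_n) : Prop :=
  forall p q : 'I_n, (k <= p)%N -> (p < q)%N -> (v q < v p)%N.

(* Main.v *)
Require Import Defs.
From mathcomp Require Import all_boot all_fingroup zify.
Set Implicit Arguments. Unset Strict Implicit. Unset Printing Implicit Defensive.

Lemma swapE n (u : 'S_n) i j x : swap_pos u i j x = u (tperm i j x).
Proof. by rewrite /swap_pos permM. Qed.

Definition hh n (i j : 'I_n) (x : 'I_n * 'I_n) :=
  if (tperm i j x.1 < tperm i j x.2)%N then (tperm i j x.1, tperm i j x.2) else x.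

Lemma hh_inj n (i j : 'I_n) :
  {in [pred x : 'I_n * 'I_n | (x.1 < x.2)%N] &, injective (hh i j)}.
Proof.
move=> [x1 x2] [y1 y2]; rewrite !inE /hh /= => lx ly.
case: ifP => cx; case: ifP => cy.
- by case=> e1 e2; rewrite (perm_inj e1) (perm_inj e2).
- by case=> e1 e2; move: cy; rewrite -e1 -e2 !tpermK lx.
- by case=> e1 e2; move: cx; rewrite e1 e2 !tpermK ly.
- by [].
Qed.

Lemma neq_ord n (x y : 'I_n) : x <> y -> (x:nat) != y.
Proof. by move=> h; apply/eqP=> e; apply: h; apply: val_inj. Qed.

Lemma neq_ord2 n (x y : 'I_n) : x != y -> (x:nat) != y.
Proof. by []. Qed.

Definition Iset n (w : 'S_n) := [set p : 'I_n * 'I_n | (p.1 < p.2)%N && (w p.2 < w p.1)%N].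

Lemma ellE n (w : 'S_n) : ell w = #|Iset w|. Proof. by []. Qed.

Lemma card_inj_sub (T : finType) (X Y : {set T}) f :
  {in X &, injective f} -> f @: X \subset Y -> #|X| <= #|Y|.
Proof. by move=> fi sub; rewrite -(card_in_imset fi); apply: subset_leq_card. Qed.

Ltac tcase x := case: (tpermP _ _ x) => [->|->|/neq_ord ? /neq_ord ?].

Lemma ell_swap_gt n (u : 'S_n) (i j : 'I_n) : (i < j)%N -> (u j < u i)%N ->
  (ell (swap_pos u i j) < ell u)%N.
Proof.
move=> ij uji; rewrite !ellE.
have ijI : (i, j) \in Iset u by rewrite inE /= ij uji.
rewrite (cardsD1 (i, j) (Iset u)) ijI add1n ltnS.
apply: (@card_inj_sub _ _ _ (hh i j)).
  by apply: sub_in2 (@hh_inj n i j) => x; rewrite !inE => /andP[].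
apply/subsetP => y /imsetP[[x1 x2]]; rewrite !inE /= !swapE => /andP[l1 l2] ->.
rewrite /hh /=.
have ne : forall a b : 'I_n, ((a, b) != (i, j)) = ~~ (((a:nat) == i) && ((b:nat) == j)).
  by move=> a b; rewrite xpair_eqE.
case: ifP => c; rewrite ne /=; move: l1 l2 c; tcase x1; tcase x2; lia.
Qed.

Lemma ell_swap_cover n (u : 'S_n) (i j r : 'I_n) : (i < r < j)%N ->
  (u i < u r < u j)%N -> (ell u + 3 <= ell (swap_pos u i j))%N.
Proof.
move=> /andP[ir rj] /andP[uir urj]; rewrite !ellE.
set Y := Iset (swap_pos u i j).
have inY : forall a b : 'I_n, ((a, b) \in Y) = (a < b)%N && (u (tperm i j b) < u (tperm i j a))%N.
  by move=> a b; rewrite inE /= !swapE.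
have tI : tperm i j i = j by rewrite tpermL.
have tJ : tperm i j j = i by rewrite tpermR.
have tR : tperm i j r = r.
  by rewrite tpermD // -val_eqE /= neq_ltn ?ir ?rj ?orbT.
have e1 : (i, j) \in Y by rewrite inY tI tJ; lia.
have e2 : (i, r) \in Y by rewrite inY tI tR; lia.
have e3 : (r, j) \in Y by rewrite inY tR tJ; lia.
have ne : forall a b c d : 'I_n, ((a, b) != (c, d)) = ~~ (((a:nat) == c) && ((b:nat) == d)).
  by move=> a b c d; rewrite xpair_eqE.
rewrite (cardsD1 (i, j) Y) e1 (cardsD1 (i, r) (Y :\ (i,j))) in_setD1 e2 ne /=.
rewrite (cardsD1 (r, j) ((Y :\ (i,j)) :\ (i, r))) !in_setD1 e3 !ne /=.
have b3 : ((r:nat) == j) = false by lia.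
have b2 : ((r:nat) == i) = false by lia.
rewrite ?b3 ?b2 ?andbF /=.
have b3' : (r == j) = false by apply/negbTE; rewrite -val_eqE /=; lia.
have b2' : (r == i) = false by apply/negbTE; rewrite -val_eqE /=; lia.
rewrite ?b3' ?b2' ?andbF /=.
rewrite !add1n addn3 !ltnS.
apply: (@card_inj_sub _ _ _ (hh i j)).
  by apply: sub_in2 (@hh_inj n i j) => x; rewrite !inE => /andP[].
apply/subsetP => y /imsetP[[x1 x2]]; rewrite !inE /= => /andP[l1 l2] ->.
rewrite /hh /=.
have h1 : (x1:nat) != r \/ (u x1:nat) = u r by case: (eqVneq x1 r) => [->|/neq_ord2]; [right|left].
have h2 : (x2:nat) != r \/ (u x2:nat) = u r by case: (eqVneq x2 r) => [->|/neq_ord2]; [right|left].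
case: ifP => c; rewrite !ne /= ?swapE ?tpermK; move: h1 h2 l1 l2 c; tcase x1; tcase x2; rewrite ?tI ?tJ; lia.
Qed.

Inductive SD n k (u w : 'S_n) (x y p q : 'I_n) : Prop :=
  SDi of (p < k)%N & (k <= q)%N & w = swap_pos u p q & x = u p & y = u q & (x < y)%N &
      (forall r : 'I_n, (p < r < q)%N -> ~~ ((x < u r < y)%N)).

Lemma kstep_SD n k (u w : 'S_n) x y : kstep k u w x y -> exists p q, SD k u w x y p q.
Proof.
case=> i [j [[ij ik kj] [-> e -> ->]]]; exists i, j; constructor=> //.
- case: (ltngtP (u i) (u j)) => // h.
  + by have := ell_swap_gt ij h; rewrite e ltnNge leqnSn.
  + by move/val_inj/perm_inj: h => h; move: ij; rewrite h ltnn.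
- move=> r rij; apply/negP => urij.
  by have := ell_swap_cover rij urij; rewrite e; lia.
Qed.

Section SDfacts.
Variables (n k : nat) (u w : 'S_n) (x y p q : 'I_n).
Hypothesis H : SD k u w x y p q.

Lemma SD_pq : (p < q)%N.
Proof. by case: H => pk kq _ _ _ _ _; apply: leq_trans pk kq. Qed.

Lemma SD_p : w p = y.
Proof. by case: H => _ _ -> _ -> _ _; rewrite swapE tpermL. Qed.

Lemma SD_q : w q = x.
Proof. by case: H => _ _ -> -> _ _ _; rewrite swapE tpermR. Qed.

Lemma SD_other r : r != p -> r != q -> w r = u r.
Proof. by case: H => _ _ -> _ _ _ _ rp rq; rewrite swapE tpermD // eq_sym. Qed.

Lemma SD_chg r : w r != u r -> r = p \/ r = q.
Proof.
case: (eqVneq r p) => [->|rp]; first by left.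
case: (eqVneq r q) => [->|rq]; first by right.
by rewrite SD_other // eqxx.
Qed.

Lemma SD_xy : x != y.
Proof. by case: H => _ _ _ _ _ lt _; rewrite -val_eqE /= neq_ltn lt. Qed.

End SDfacts.

Lemma SD_uniq n k (u w : 'S_n) x y p q x' y' p' q' :
  SD k u w x y p q -> SD k u w x' y' p' q' -> [/\ p = p', q = q', x = x' & y = y'].
Proof.
move=> H H'.
have hp : p = p'.
  have : w p != u p by rewrite (SD_p H); case: (H) => _ _ _ <- _ _ _; rewrite eq_sym (SD_xy H).
  case/(SD_chg H') => // e; case: (H) => pk _ _ _ _ _ _; case: (H') => _ kq _ _ _ _ _.
  by move: pk; rewrite e ltnNge kq.
have hq : q = q'.
  have : w q != u q by rewrite (SD_q H); case: (H) => _ _ _ _ <- _ _; rewrite (SD_xy H).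
  case/(SD_chg H') => // e; case: (H) => _ kq _ _ _ _ _; case: (H') => pk _ _ _ _ _ _.
  by move: pk; rewrite -e ltnNge kq.
case: (H) => _ _ _ -> -> _ _; case: (H') => _ _ _ -> -> _ _.
by rewrite hp hq.
Qed.

Lemma first_change (T : eqType) (f : nat -> T) a b : a <= b -> f b <> f a ->
  exists t, a <= t < b /\ f t = f a /\ f t.+1 <> f t.
Proof.
elim: b => [|b IH] ab fb.
  by move: ab; rewrite leqn0 => /eqP e; case: fb; rewrite e.
case: (ltnP a b.+1) => [|ba]; last first.
  have e : a = b.+1 by apply/eqP; rewrite eqn_leq ab ba.
  by case: fb; rewrite e.
rewrite ltnS => ab'.
case: (eqVneq (f b) (f a)) => [e|ne].
  by exists b; split; [rewrite ab' ltnSn | split=> // e'; apply: fb; rewrite e'].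
have [t [h1 h2]] := IH ab' (elimN eqP ne).
by exists t; split=> //; case/andP: h1 => -> /= /ltnW; rewrite ltnS.
Qed.

Lemma last_change (T : eqType) (f : nat -> T) a b : a <= b -> f b <> f a ->
  exists t, a <= t < b /\ f t.+1 = f b /\ f t.+1 <> f t.
Proof.
elim: b => [|b IH] ab fb.
  by move: ab; rewrite leqn0 => /eqP e; case: fb; rewrite e.
case: (ltnP a b.+1) => [|ba]; last first.
  have e : a = b.+1 by apply/eqP; rewrite eqn_leq ab ba.
  by case: fb; rewrite e.
rewrite ltnS => ab'.
case: (eqVneq (f b.+1) (f b)) => [e|ne].
  have fb' : f b <> f a by rewrite -e.
  have [t [h1 h2]] := IH ab' fb'.
  by exists t; rewrite e; split=> //; case/andP: h1 => -> /= /ltnW; rewrite ltnS.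
by exists b; split; [rewrite ab' ltnSn | split=> //; apply/eqP].
Qed.

Section Chain.
Variables (n k : nat) (s : seq 'S_n).
Hypothesis HK : inc_kchain k s.
Local Notation v t := (nth 1%g s t).
Local Notation D := (size s).

Definition KS t x y p q := kstep k (v t) (v t.+1) x y /\ SD k (v t) (v t.+1) x y p q.

Lemma HC t : t.+1 < D -> exists x y p q, KS t x y p q.
Proof.
move=> tD; case: (HK.1 t tD) => x [y ks].
by have [p [q sd]] := kstep_SD ks; exists x, y, p, q.
Qed.

Lemma KS_lt t x y p q : KS t x y p q -> x < y.
Proof. by case=> _ []. Qed.

Lemma INC t t' x y p q x' y' p' q' : t < t' -> t'.+1 < D ->
  KS t x y p q -> KS t' x' y' p' q' -> x < x'.
Proof.
elim: t' x' y' p' q' => [//|t' IH] x' y' p' q' tt' tD K K'.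
have cons : forall x1 y1 p1 q1 x2 y2 p2 q2, t'.+2 < D ->
    KS t' x1 y1 p1 q1 -> KS t'.+1 x2 y2 p2 q2 -> x1 < x2.
  move=> x1 y1 p1 q1 x2 y2 p2 q2 h K1 K2.
  have := HK.2 t' h x1 y1 x2 y2 K1.1 K2.1.
  by rewrite /minn (KS_lt K1) (KS_lt K2).
move: tt'; rewrite ltnS leq_eqVlt => /orP[/eqP e|lt].
  by move: K; rewrite e => K; apply: cons K K'.
have [x2 [y2 [p2 [q2 K2]]]] := HC (ltnW tD).
apply: (ltn_trans (IH _ _ _ _ lt (ltnW tD) K K2)).
exact: cons K2 K'.
Qed.

Lemma chg_left t (r : 'I_n) : t.+1 < D -> r < k -> v t.+1 r <> v t r ->
  exists y q, KS t (v t r) y r q.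
Proof.
move=> tD rk ne; have [x [y [p [q K]]]] := HC tD.
have sd := K.2.
case: (SD_chg sd (introN eqP ne)) => e.
  by exists y, q; case: sd => _ _ _ ex _ _ _; rewrite e -ex.
by case: sd => _ kq _ _ _ _ _; move: rk; rewrite e ltnNge kq.
Qed.

Lemma chg_right t (r : 'I_n) : t.+1 < D -> k <= r -> v t.+1 r <> v t r ->
  exists x p, KS t x (v t r) p r /\ x = v t.+1 r.
Proof.
move=> tD kr ne; have [x [y [p [q K]]]] := HC tD.
have sd := K.2.
case: (SD_chg sd (introN eqP ne)) => e.
  by case: sd => pk _ _ _ _ _ _; move: pk; rewrite -e ltnNge kr.
exists x, p; rewrite e (SD_q sd); split=> //.
by case: sd => _ _ _ _ ey _ _; rewrite -ey.
Qed.

Lemma left_mono (r : 'I_n) T T' : r < k -> T <= T' -> T' < D -> v T r <= v T' r.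
Proof.
move=> rk; elim: T' => [|T' IH] TT' TD.
  by move: TT'; rewrite leqn0 => /eqP ->.
case: (ltnP T T'.+1) => [|h]; last first.
  have e : T = T'.+1 by apply/eqP; rewrite eqn_leq TT' h.
  by rewrite e.
rewrite ltnS => TT; apply: (leq_trans (IH TT (ltnW TD))).
case: (eqVneq (v T'.+1 r) (v T' r)) => [->//|/eqP ne].
have [y [q K]] := chg_left TD rk ne.
have sd := K.2; rewrite (SD_p sd).
by case: sd => _ _ _ _ -> lt _; apply: ltnW.
Qed.

Lemma right_mono (r : 'I_n) T T' : k <= r -> T <= T' -> T' < D -> v T' r <= v T r.
Proof.
move=> kr; elim: T' => [|T' IH] TT' TD.
  by move: TT'; rewrite leqn0 => /eqP ->.
case: (ltnP T T'.+1) => [|h]; last first.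
  have e : T = T'.+1 by apply/eqP; rewrite eqn_leq TT' h.
  by rewrite e.
rewrite ltnS => TT; apply: (leq_trans _ (IH TT (ltnW TD))).
case: (eqVneq (v T'.+1 r) (v T' r)) => [->//|/eqP ne].
have [x [p [K <-]]] := chg_right TD kr ne.
by apply: ltnW; apply: (KS_lt K).
Qed.

End Chain.

Lemma lt_neq n (x y : 'I_n) : (x < y)%N -> x <> y.
Proof. by move=> h e; move: h; rewrite e ltnn. Qed.

Lemma gt_neq n (x y : 'I_n) : (y < x)%N -> x <> y.
Proof. by move=> h e; move: h; rewrite e ltnn. Qed.

Theorem lemma3p14 (n k : nat) (s : seq 'S_n) (u w : 'S_n)
  (m : nat) (a b i : 'I_n) :
  (0 < k)%N -> (k < n)%N ->
  dec_after k w ->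
  (0 < size s)%N -> head 1%g s = u -> last 1%g s = w ->
  inc_kchain k s ->
  (m.+1 < size s)%N ->
  (kstep k (nth 1%g s m) (nth 1%g s m.+1) a b \/
   kstep k (nth 1%g s m) (nth 1%g s m.+1) b a) ->
  (a < b)%N ->
  nth 1%g s m.+1 i = b ->
  [/\ (forall p : 'I_n, (p < k)%N -> u p != b),
      (forall c : 'I_n, (a < c < b)%N -> ((u^-1)%g c < i)%N) &
      (forall c : 'I_n, (a < c < b)%N ->
         forall m', (m'.+1 < size s)%N ->
         forall x y : 'I_n, kstep k (nth 1%g s m') (nth 1%g s m'.+1) x y ->
         c != x /\ c != y)].
Proof.
move=> k0 kn dec D0 hu hw HK mD hab ab hi.
have [pm [qm Km]] : exists pm qm, KS k s m a b pm qm.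
  case: hab => ks; have [p [q sd]] := kstep_SD ks.
    by exists p, q; split.
  by case: sd => _ _ _ _ _ lt _; move: ab; rewrite ltnNge (ltnW lt).
have sdm := Km.2.
case: (sdm) => pmk kqm _ ea eb _ covm.
have ipm : i = pm by apply: (@perm_inj _ (nth 1%g s m.+1)); rewrite hi (SD_p sdm).
subst i.
have pmqm : (pm < qm)%N by apply: leq_trans pmk kqm.
have wE : w = nth 1%g s (size s).-1 by rewrite nth_last.
have uE : u = nth 1%g s 0 by rewrite nth0.
have mD1 : (m < (size s).-1)%N by move: mD; case: (size s).
have D1 : ((size s).-1 < size s)%N by move: D0; case: (size s).
have Fa : forall T, (m < T)%N -> (T < size s)%N -> nth 1%g s T qm = a.
  move=> T mT TD; case: (eqVneq (nth 1%g s T qm) a) => // /eqP ne.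
  have ne' : (fun t => nth 1%g s t qm) T <> (fun t => nth 1%g s t qm) m.+1.
    by rewrite /= (SD_q sdm).
  have [t [/andP[h1 h2] [h3 h4]]] := last_change (f := fun t => nth 1%g s t qm) mT ne'.
  have tD : (t.+1 < size s)%N by apply: leq_ltn_trans h2 TD.
  have [x [p [K xe]]] := chg_right HK tD kqm h4.
  have := INC HK h1 tD Km K.
  have := right_mono HK kqm mT TD; rewrite (SD_q sdm) -h3 -xe => h5 h6.
  by move: (leq_trans h6 h5); rewrite ltnn.
have FR : forall r : 'I_n, (qm < r)%N -> (nth 1%g s m r < a)%N.
  move=> r qr; rewrite ltnNge; apply/negP => ar.
  have kr : (k <= r)%N by apply: leq_trans kqm (ltnW qr).
  have wr : (w r < a)%N by rewrite -(Fa _ mD1 D1) -wE; apply: dec.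
  have ne : (fun t => nth 1%g s t r) (size s).-1 <> (fun t => nth 1%g s t r) m.
    by move=> /= e; move: wr; rewrite wE e ltnNge ar.
  have [t [/andP[h1 h2] [h3 h4]]] := last_change (f := fun t => nth 1%g s t r) (ltnW mD1) ne.
  have tD : (t.+1 < size s)%N by apply: leq_ltn_trans h2 D1.
  have [x [p [K xe]]] := chg_right HK tD kr h4.
  move: h1; rewrite leq_eqVlt => /orP[/eqP et|mt].
    subst t; have [_ e _ _] := SD_uniq sdm K.2.
    by move: qr; rewrite e ltnn.
  have := INC HK mt tD Km K.
  by rewrite xe /= h3 -wE ltnNge (ltnW wr).
have C1 : forall c : 'I_n, (a < c < b)%N ->
    exists rc : 'I_n, (rc < pm)%N /\ nth 1%g s m rc = c.
  move=> c /andP[ac cb]; set rc := ((nth 1%g s m)^-1)%g c.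
  have vrc : nth 1%g s m rc = c by rewrite /rc permKV.
  exists rc; split=> //.
  case: (ltngtP rc pm) => // h.
  - case: (ltngtP rc qm) => h'.
    + by have := covm rc; rewrite h h' vrc ac cb => /(_ isT).
    + by have := FR rc h'; rewrite vrc ltnNge (ltnW ac).
    + have e : rc = qm by apply: val_inj.
      by move: cb; rewrite -vrc e -eb ltnn.
  - have e : rc = pm by apply: val_inj.
    by move: ac; rewrite -vrc e -ea ltnn.
have P3 : forall c : 'I_n, (a < c < b)%N ->
         forall t, (t.+1 < size s)%N ->
         forall x y : 'I_n, kstep k (nth 1%g s t) (nth 1%g s t.+1) x y ->
         c != x /\ c != y.
  move=> c cab t tD x y ks.
  have [pt [qt sd]] := kstep_SD ks.
  have K : KS k s t x y pt qt by split.
  have [rc [rcpm vrc]] := C1 c cab.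
  case/andP: (cab) => ac cb.
  have rck : (rc < k)%N by apply: ltn_trans rcpm pmk.
  have ptk : (pt < k)%N by case: sd.
  have kqt : (k <= qt)%N by case: sd.
  split; apply/eqP => ec.
  - subst x; case: (sd) => _ _ _ ex ey xy covt; case: (ltngtP t m) => tm.
    + by have := INC HK tm mD K Km; rewrite ltnNge (ltnW ac).
    +
      have vt : nth 1%g s t rc = c.
        case: (eqVneq (nth 1%g s t rc) c) => // /eqP ne.
        have ne' : (fun T => nth 1%g s T rc) t <> (fun T => nth 1%g s T rc) m by rewrite /= vrc.
        have [t' [/andP[h1 h2] [h3 h4]]] := first_change (f := fun T => nth 1%g s T rc) (ltnW tm) ne'.
        have t'D : (t'.+1 < size s)%N by apply: leq_ltn_trans h2 (ltnW tD).
        have [y' [q' K']] := chg_left HK t'D rck h4.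
        by have := INC HK h2 tD K' K; rewrite /= h3 vrc ltnn.
      have ptrc : pt = rc by apply: (@perm_inj _ (nth 1%g s t)); rewrite vt ex.
      subst pt.
      have vb : nth 1%g s t pm = b.
        case: (eqVneq (nth 1%g s t pm) b) => // /eqP ne.
        have ne' : (fun T => nth 1%g s T pm) t <> (fun T => nth 1%g s T pm) m.+1 by rewrite /= (SD_p sdm).
        have [t' [/andP[h1 h2] [h3 h4]]] := first_change (f := fun T => nth 1%g s T pm) tm ne'.
        have t'D : (t'.+1 < size s)%N by apply: leq_ltn_trans h2 (ltnW tD).
        have [y' [q' K']] := chg_left HK t'D pmk h4.
        have := INC HK h2 tD K' K; rewrite /= h3 (SD_p sdm).
        by rewrite ltnNge (ltnW cb).
      have pmqt : (pm < qt)%N by apply: leq_trans pmk kqt.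
      have yb : (y < b)%N.
        have := covt pm; rewrite rcpm pmqt vb cb /= => /(_ isT).
        rewrite -leqNgt leq_eqVlt => /orP[/eqP e|//].
        have : qt = pm by apply: (@perm_inj _ (nth 1%g s t)); rewrite vb -ey; apply: val_inj.
        by move=> e'; move: pmqt; rewrite e' ltnn.
      have wqt : nth 1%g s (size s).-1 qt = c.
        case: (eqVneq (nth 1%g s (size s).-1 qt) c) => // /eqP ne.
        have ne' : (fun T => nth 1%g s T qt) (size s).-1 <> (fun T => nth 1%g s T qt) t.+1 by rewrite /= (SD_q sd).
        have tD1 : (t.+1 <= (size s).-1)%N by move: tD; case: (size s).
        have [t' [/andP[h1 h2] [h3 h4]]] := last_change (f := fun T => nth 1%g s T qt) tD1 ne'.
        have t'D : (t'.+1 < size s)%N by apply: leq_ltn_trans h2 D1.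
        have [c' [p' [K' xe]]] := chg_right HK t'D kqt h4.
        have := INC HK h1 t'D K K'.
        have := right_mono HK kqt tD1 D1; rewrite (SD_q sd) xe /= h3.
        move=> h5 h6; have h7 : nth 1%g s (size s).-1 qt <> c by [].
        by move: h5 h6 h7; rewrite leq_eqVlt => /orP[/eqP /val_inj -> //|h5]; rewrite ltnNge (ltnW h5).
      have wqm := Fa _ mD1 D1.
      have qtqm : (qt < qm)%N.
        case: (ltngtP qt qm) => // h.
          have := dec qm qt kqm h; rewrite wE wqt wqm ltnNge (ltnW ac).
          by [].
        have e : qt = qm by apply: val_inj.
        by move: wqt; rewrite e wqm => e'; move: ac; rewrite e' ltnn.
      have vmqt : (b < nth 1%g s m qt)%N.
        have h1 := right_mono HK kqt (ltnW tm) (ltnW tD).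
        have h2 : (a < nth 1%g s m qt)%N by apply: ltn_trans ac (leq_trans _ h1); rewrite -ey.
        have := covm qt; rewrite pmqt qtqm h2 /= => /(_ isT).
        rewrite -leqNgt leq_eqVlt => /orP[/eqP e|//].
        have : qt = qm by apply: (@perm_inj _ (nth 1%g s m)); rewrite -eb; apply: val_inj.
        by move=> e'; move: qtqm; rewrite e' ltnn.
      have ne' : (fun T => nth 1%g s T qt) t <> (fun T => nth 1%g s T qt) m.
        by move=> /= e; move: vmqt; rewrite -e -ey ltnNge (ltnW yb).
      have [t' [/andP[h1 h2] [h3 h4]]] := last_change (f := fun T => nth 1%g s T qt) (ltnW tm) ne'.
      have t'D : (t'.+1 < size s)%N by apply: leq_ltn_trans h2 (ltnW tD).
      have [c' [p' [K' xe]]] := chg_right HK t'D kqt h4.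
      move: h1; rewrite leq_eqVlt => /orP[/eqP et|mt'].
        subst t'; have [_ e _ _] := SD_uniq sdm K'.2.
        by move: qtqm; rewrite e ltnn.
      have := INC HK h2 tD K' K; rewrite xe /= h3 -ey.
      by rewrite ltnNge (ltnW xy).
    + subst t; have [_ _ e _] := SD_uniq sdm sd.
      by move: ac; rewrite e ltnn.
  - subst y; case: (sd) => _ _ _ ex ey xy covt; case: (ltngtP t m) => tm.
    +
      have v1 : nth 1%g s t.+1 pt = c by rewrite (SD_p sd).
      have vm : nth 1%g s m pt = c.
        case: (eqVneq (nth 1%g s m pt) c) => // /eqP ne.
        have ne' : (fun T => nth 1%g s T pt) m <> (fun T => nth 1%g s T pt) t.+1 by rewrite /= v1.
        have [t' [/andP[h1 h2] [h3 h4]]] := first_change (f := fun T => nth 1%g s T pt) tm ne'.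
        have t'D : (t'.+1 < size s)%N by apply: leq_ltn_trans h2 (ltnW mD).
        have [c' [q' K']] := chg_left HK t'D ptk h4.
        have := INC HK h2 mD K' Km; rewrite /= h3 v1.
        by rewrite ltnNge (ltnW ac).
      have ptrc : pt = rc by apply: (@perm_inj _ (nth 1%g s m)); rewrite vm vrc.
      subst pt.
      have pmqt : (pm < qt)%N by apply: leq_trans pmk kqt.
      have xa := INC HK tm mD K Km.
      have h1 := left_mono HK pmk (ltnW tm) (ltnW mD).
      have vtpm : (nth 1%g s t pm < x)%N.
        have := covt pm; rewrite rcpm pmqt /= => /(_ isT).
        have -> : (nth 1%g s t pm < c)%N by apply: leq_ltn_trans h1 _; rewrite -ea.
        rewrite andbT -leqNgt leq_eqVlt => /orP[/eqP e|//].
        have : pm = rc by apply: (@perm_inj _ (nth 1%g s t)); rewrite -ex; apply: val_inj.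
        by move=> e'; move: rcpm; rewrite e' ltnn.
      have ne' : (fun T => nth 1%g s T pm) m <> (fun T => nth 1%g s T pm) t.
        by move=> /= e; move: vtpm; rewrite -e -ea ltnNge (ltnW xa).
      have [t' [/andP[h2 h3] [h4 h5]]] := first_change (f := fun T => nth 1%g s T pm) (ltnW tm) ne'.
      have t'D : (t'.+1 < size s)%N by apply: leq_ltn_trans h3 (ltnW mD).
      have [c' [q' K']] := chg_left HK t'D pmk h5.
      move: h2; rewrite leq_eqVlt => /orP[/eqP et|tt'].
        subst t'; have [e _ _ _] := SD_uniq sd K'.2.
        by move: rcpm; rewrite e ltnn.
      have := INC HK tt' t'D K K'; rewrite /= h4.
      by rewrite ltnNge (ltnW vtpm).
    +
      have ne' : (fun T => nth 1%g s T rc) t <> (fun T => nth 1%g s T rc) m.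
        move=> /= e; have : rc = qt by apply: (@perm_inj _ (nth 1%g s t)); rewrite e vrc.
        by move=> e'; move: rck; rewrite e' ltnNge kqt.
      have [t' [/andP[h1 h2] [h3 h4]]] := first_change (f := fun T => nth 1%g s T rc) (ltnW tm) ne'.
      have t'D : (t'.+1 < size s)%N by apply: leq_ltn_trans h2 (ltnW tD).
      have [c' [q' K']] := chg_left HK t'D rck h4.
      have := INC HK h2 tD K' K; rewrite /= h3 vrc.
      by rewrite ltnNge (ltnW xy).
    + subst t; have [_ _ _ e] := SD_uniq sdm sd.
      by move: cb; rewrite e ltnn.
split=> //.
- move=> p pk; apply/eqP => upb.
  have v0 : nth 1%g s 0 p = b by rewrite -uE.
  have ne' : (fun T => nth 1%g s T p) m <> (fun T => nth 1%g s T p) 0.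
    move=> /= e; have : p = qm by apply: (@perm_inj _ (nth 1%g s m)); rewrite e v0 eb.
    by move=> e'; move: pk; rewrite e' ltnNge kqm.
  have [t' [/andP[h1 h2] [h3 h4]]] := first_change (f := fun T => nth 1%g s T p) (leq0n m) ne'.
  have t'D : (t'.+1 < size s)%N by apply: leq_ltn_trans h2 (ltnW mD).
  have [y' [q' K']] := chg_left HK t'D pk h4.
  have := INC HK h2 mD K' Km; rewrite /= h3 v0.
  by rewrite ltnNge (ltnW ab).
- move=> c cab.
  have [rc [rcpm vrc]] := C1 c cab.
  have v0 : nth 1%g s 0 rc = c.
    case: (eqVneq (nth 1%g s 0 rc) c) => // /eqP ne.
    have ne' : (fun T => nth 1%g s T rc) m <> (fun T => nth 1%g s T rc) 0 by rewrite /= vrc => e; apply: ne.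
    have [t [/andP[h1 h2] [h3 h4]]] := last_change (f := fun T => nth 1%g s T rc) (leq0n m) ne'.
    have tD : (t.+1 < size s)%N by apply: leq_ltn_trans h2 (ltnW mD).
    have [x [y [p [q K]]]] := HC HK tD.
    have [cx cy] := P3 c cab t tD x y K.1.
    case: (SD_chg K.2 (introN eqP h4)) => e; subst rc.
      by move: cy; rewrite -(SD_p K.2) /= h3 vrc eqxx.
    by move: cx; rewrite -(SD_q K.2) /= h3 vrc eqxx.
  by rewrite uE -v0 permK.
Qed.
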